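(* Fix real numbers $L,\ell_1,\ell_2>0$. The mapping $(\phi_1,\phi_2)\mapsto\phi_1\otimes\phi_2$ induces a continuous bijection \[\bigsqcup_{\substack{\ell'_1>0,\ \ell'_2>0\\ \ell'_1+\ell'_2=L}}\mathcal{G}(\ell'_1,\ell_1)\times\mathcal{G}(\ell'_2,\ell_2)\longrightarrow\mathcal{G}(L,\ell_1+\ell_2)\] which is not a homeomorphism.
   Context: $\mathcal{G}$ is the category whose objects are the real numbers $\ell>0$, with $\mathcal{G}(\ell_1,\ell_2)$ the set of nondecreasing homeomorphisms $[0,\ell_1]\to[0,\ell_2]$ (necessarily sending $0\mapsto0$, $\ell_1\mapsto\ell_2$), equipped with the compact-open topology, and composition given by composition of maps. For $\phi_i:[0,\ell_i]\to[0,\ell'_i]$ ($i=1,2$), $\phi_1\otimes\phi_2:[0,\ell_1+\ell_2]\to[0,\ell'_1+\ell'_2]$ is defined by $(\phi_1\otimes\phi_2)(t)=\phi_1(t)$ for $0\le t\le\ell_1$ and $\phi_2(t-\ell_1)+\ell'_1$ for $\ell_1\le t\le\ell_1+\ell_2$; on objects $\ell\otimes\ell'=\ell+\ell'$. The disjoint union on the left carries the disjoint union topology over the index set (indexed by the pairs $(\ell'_1,\ell'_2)$). *)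

(* Defs.v *)
From HB Require Import structures.
From mathcomp Require Import all_boot all_order all_algebra.
From mathcomp Require Import all_classical all_reals all_analysis.
Unset Printing Implicit Defensive.
Import Order.TTheory GRing.Theory Num.Theory.
Local Open Scope classical_set_scope.
Local Open Scope ring_scope.

(* The interval [0, l] as a topological space (subspace topology of R,
   realised as the sigma type with the initial topology of the inclusion). *)
Definition Icc0 (R : realType) (l : R) : Type := set_type `[0, l].

Definition is_nd_homeo (R : realType) (l1 l2 : R) (f : Icc0 R l1 -> Icc0 R l2) :=
  {homo f : x y / set_val x <= set_val y >-> set_val x <= set_val y} /\
  continuous f /\
  exists g : Icc0 R l2 -> Icc0 R l1, [/\ continuous g, cancel f g & cancel g f].

Definition Gset (R : realType) (l1 l2 : R) :
  set {compact-open, Icc0 R l1 -> Icc0 R l2} := [set f | is_nd_homeo R l1 l2 f].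

Definition G (R : realType) (l1 l2 : R) : topologicalType := set_type (Gset R l1 l2).

Definition splits (R : realType) (L : R) : set (R * R) :=
  [set p | 0 < p.1 /\ 0 < p.2 /\ p.1 + p.2 = L].

Definition Gsum (R : realType) (L l1 l2 : R) : topologicalType :=
  {p : set_type (splits R L) & (G R (set_val p).1 l1 * G R (set_val p).2 l2)%type}.

(* Main.v *)
Require Import Defs.
From HB Require Import structures.
From mathcomp Require Import all_boot all_order all_algebra.
From mathcomp Require Import all_classical all_reals all_analysis.
Import Order.TTheory GRing.Theory Num.Theory.
Local Open Scope classical_set_scope.
Local Open Scope ring_scope.
From mathcomp Require Import ring lra.
Import numFieldNormedType.Exports.


Set Implicit Arguments. Unset Strict Implicit.
Section Real.
Variable R : realType.
Implicit Types (a b x y : R).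

Definition clampR (a x : R) : R := Num.min (Num.max x 0) a.

Lemma minl a b : a <= b -> Num.min a b = a.
Proof. by rewrite /Num.min; case: ltP => // ? ?; apply/eqP; rewrite eq_le; apply/andP. Qed.
Lemma minE a b : Num.min a b = if a < b then a else b. Proof. by []. Qed.
Lemma maxE a b : Num.max a b = if a < b then b else a. Proof. by []. Qed.

Lemma clampR_range a x : 0 <= a -> 0 <= clampR a x <= a.
Proof.
move=> ha; rewrite /clampR minE maxE.
by case: (ltP x 0) => hx; case: ltP => h /=; apply/andP; split; lra.
Qed.

Lemma clampR_id a x : 0 <= x <= a -> clampR a x = x.
Proof.
case/andP=> h0 h1; rewrite /clampR minE maxE.
case: (ltP x 0) => hx; first lra.
by case: ltP => h //; apply/eqP; rewrite eq_le h h1.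
Qed.

Lemma clampR_le0 a x : 0 <= a -> x <= 0 -> clampR a x = 0.
Proof.
move=> ha hx; rewrite /clampR minE maxE.
by case: (ltP x 0) => h; case: ltP => h' //; lra.
Qed.

Lemma clampR_ge a x : 0 <= a -> a <= x -> clampR a x = a.
Proof.
move=> ha hx; rewrite /clampR minE maxE.
case: (ltP x 0) => h; case: ltP => h' //; lra.
Qed.

Lemma clampR_homo a : {homo clampR a : x y / x <= y}.
Proof.
move=> x y hxy; rewrite /clampR !minE !maxE.
case: (ltP x 0) => h1; case: (ltP y 0) => h2; do 2 case: ltP => ? //; lra.
Qed.

Lemma clampR_cont a : continuous (clampR a).
Proof.
move=> x; rewrite /clampR.
apply: (@continuous_min R R (fun x => Num.max x 0) (fun _ => a)).
  apply: (@continuous_max R R id (fun _ => 0)); [exact: cvg_id|exact: cvg_cst].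
exact: cvg_cst.
Qed.

Record Good a b (h k : R -> R) : Prop := MkGood {
  g_hc : continuous h; g_kc : continuous k;
  g_hm : {homo h : x y / x <= y}; g_km : {homo k : x y / x <= y};
  g_h0 : forall x, x <= 0 -> h x = 0; g_h1 : forall x, a <= x -> h x = b;
  g_k0 : forall y, y <= 0 -> k y = 0; g_k1 : forall y, b <= y -> k y = a;
  g_kh : forall x, 0 <= x <= a -> k (h x) = x;
  g_hk : forall y, 0 <= y <= b -> h (k y) = y }.

Lemma Good_sym a b h k : Good a b h k -> Good b a k h.
Proof. by case=> *; split. Qed.

Lemma Good_range a b h k : 0 <= a -> Good a b h k -> forall x, 0 <= h x <= b.
Proof.
move=> ha [_ _ hh _ h0 h1 _ _ _ _] x.
have b0 : 0 <= b by rewrite -(h1 a (lexx a)) -(h0 0 (lexx 0)) hh.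
case: (lerP x 0) => hx; first by rewrite h0 // lexx.
case: (lerP a x) => hx'; first by rewrite h1 // lexx b0.
by rewrite -(h0 0 (lexx 0)) -(h1 a (lexx a)) !hh // ltW.
Qed.

Lemma Good_b0 a b h k : 0 <= a -> Good a b h k -> 0 <= b.
Proof.
move=> ha G; have := Good_range ha G 0; case/andP=> ? ?; lra.
Qed.

Lemma Good_clamp a b h k x : 0 <= a -> Good a b h k -> h (clampR a x) = h x.
Proof.
move=> ha [_ _ _ _ h0 h1 _ _ _ _].
case: (lerP x 0) => hx; first by rewrite clampR_le0 // !h0 // lexx.
case: (lerP a x) => hx'; first by rewrite clampR_ge // !h1 // lexx.
by rewrite clampR_id // (ltW hx) ltW.
Qed.

Definition tens (h1 h2 : R -> R) (c : R) := fun x => h1 x + h2 (x - c).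

Lemma Good_tens a1 b1 a2 b2 h1 k1 h2 k2 : 0 <= a1 -> 0 <= a2 ->
  Good a1 b1 h1 k1 -> Good a2 b2 h2 k2 ->
  Good (a1 + a2) (b1 + b2) (tens h1 h2 a1) (tens k1 k2 b1).
Proof.
move=> ha1 ha2 G1 G2.
have b1p := Good_b0 ha1 G1; have b2p := Good_b0 ha2 G2.
have r1 := Good_range ha1 G1; have r2 := Good_range ha2 G2.
have s1 := Good_range b1p (Good_sym G1); have s2 := Good_range b2p (Good_sym G2).
case: G1 => c1 d1 m1 n1 h10 h11 k10 k11 hk1 kh1.
case: G2 => c2 d2 m2 n2 h20 h21 k20 k21 hk2 kh2.
rewrite /tens; split.
- move=> x; apply: continuousD; first exact: c1.
  apply: (@continuous_comp _ _ _ (fun x => x - a1) h2); last exact: c2.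
  by apply: continuousB; [exact: cvg_id|exact: cvg_cst].
- move=> x; apply: continuousD; first exact: d1.
  apply: (@continuous_comp _ _ _ (fun x => x - b1) k2); last exact: d2.
  by apply: continuousB; [exact: cvg_id|exact: cvg_cst].
- by move=> x y hxy; apply: lerD; [exact: m1|apply: m2; rewrite lerD2r].
- by move=> x y hxy; apply: lerD; [exact: n1|apply: n2; rewrite lerD2r].
- by move=> x hx; rewrite h10 // h20 ?addr0 //; lra.
- by move=> x hx; rewrite h11 ?h21 //; lra.
- by move=> x hx; rewrite k10 // k20 ?addr0 //; lra.
- by move=> x hx; rewrite k11 ?k21 //; lra.
all: move=> x /andP [hx0 hx1].
- case: (lerP x a1) => hx.
    rewrite (h20 (x - a1)); last lra.
    rewrite addr0 hk1; last by rewrite hx0 hx.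
    have := r1 x; case/andP => ? ?.
    by rewrite k20 ?addr0 //; lra.
  rewrite h11; last lra.
  have := r2 (x - a1); case/andP => ? ?.
  rewrite k11; last lra.
  rewrite [b1 + _]addrC addrK hk2; last (apply/andP; split; lra).
  lra.
- case: (lerP x b1) => hx.
    rewrite (k20 (x - b1)); last lra.
    rewrite addr0 kh1; last by rewrite hx0 hx.
    have := s1 x; case/andP => ? ?.
    by rewrite h20 ?addr0 //; lra.
  rewrite k11; last lra.
  have := s2 (x - b1); case/andP => ? ?.
  rewrite h11; last lra.
  rewrite [a1 + _]addrC addrK kh2; last (apply/andP; split; lra).
  lra.
Qed.

Lemma contB_cst (T : topologicalType) (f : T -> R) (c : R) (x : T) :
  {for x, continuous f} -> {for x, continuous (fun t => f t - c)}.
Proof. by move=> H; apply: (@continuousB _ _ _ f (fun _ => c) x H); exact: cvg_cst. Qed.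

Lemma contD_cst (T : topologicalType) (f : T -> R) (c : R) (x : T) :
  {for x, continuous f} -> {for x, continuous (fun t => f t + c)}.
Proof. by move=> H; apply: (@continuousD _ _ _ f (fun _ => c) x H); exact: cvg_cst. Qed.

Definition lin a b := fun x => clampR a x * (b / a).

Lemma Good_lin a b : 0 < a -> 0 < b -> Good a b (lin a b) (lin b a).
Proof.
move=> a0 b0; rewrite /lin.
have cl : forall a b, 0 < a -> 0 < b -> continuous (fun x => clampR a x * (b / a)).
  move=> a' b' ? ? x; apply: continuousM; first exact: clampR_cont.
  exact: cvg_cst.
have hm : forall a b, 0 < a -> 0 < b -> {homo (fun x => clampR a x * (b / a)) : x y / x <= y}.
  move=> a' b' ? ? x y hxy; apply: ler_wpM2r; first by apply: divr_ge0; lra.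
  exact: clampR_homo.
have kh : forall a b, 0 < a -> 0 < b -> forall x, 0 <= x <= a ->
   clampR b (clampR a x * (b / a)) * (a / b) = x.
  move=> a' b' ha hb x hx; rewrite (@clampR_id a' x hx).
  rewrite clampR_id; last first.
    case/andP: hx => ? ?; apply/andP; split.
      by apply: mulr_ge0 => //; apply: divr_ge0; lra.
    have e : b' = a' * (b' / a') by field; rewrite gt_eqF.
    by rewrite {2}e; apply: ler_wpM2r => //; apply: divr_ge0; lra.
  by field; apply/andP; split; rewrite gt_eqF.
split.
- exact: cl.
- exact: cl.
- exact: hm.
- exact: hm.
- by move=> x hx; rewrite clampR_le0 ?mul0r //; lra.
- by move=> x hx; rewrite clampR_ge; [field; rewrite gt_eqF|lra|].
- by move=> x hx; rewrite clampR_le0 ?mul0r //; lra.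
- by move=> x hx; rewrite clampR_ge; [field; rewrite gt_eqF|lra|].
- exact: kh.
- exact: kh.
Qed.

Section Restr.
Variables (L B l1 : R) (h k : R -> R).
Hypotheses (L0 : 0 < L) (l10 : 0 < l1) (l1B : l1 < B) (G : Good L B h k).
Local Notation c := (k l1).
Ltac hyps := have ? := L0; have ? := l10; have ? := l1B.

Lemma restr_hc : h c = l1.
Proof. hyps; by rewrite (g_hk G) //; apply/andP; split; lra. Qed.

Lemma restr_c_range : 0 < c < L.
Proof.
hyps.
have B0 : 0 <= B by lra.
have := Good_range B0 (Good_sym G) l1; case/andP => c0 cL.

apply/andP; split.
  rewrite lt_neqAle c0 andbT; apply/eqP => e.
  by have := restr_hc; rewrite -e (g_h0 G) //; lra.
rewrite lt_neqAle cL andbT; apply/eqP => e.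
by have := restr_hc; rewrite e (g_h1 G) //; lra.
Qed.

Definition rh1 := fun x => Num.min (h x) l1.
Definition rk1 := fun y => k (Num.min y l1).
Definition rh2 := fun x => Num.max (h (x + c)) l1 - l1.
Definition rk2 := fun y => k (Num.max y 0 + l1) - c.

Lemma restr_tens : forall x, tens rh1 rh2 c x = h x.
Proof.
hyps.
move=> x; rewrite /tens /rh1 /rh2 subrK minE maxE.
by case: ltP => hx; lra.
Qed.

Lemma Good_r1 : Good c l1 rh1 rk1.
Proof.
hyps.
have hc := restr_hc; have /andP[c0 cL] := restr_c_range.
have L0' : 0 <= L by lra.
have r := Good_range L0' G.
case: G => hc' kc hm km h0 h1 k0 k1 kh hk.
rewrite /rh1 /rk1; split.
- move=> x; apply: (@continuous_min R R h (fun _ => l1)); [exact: hc'|exact: cvg_cst].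
- move=> x; apply: (@continuous_comp _ _ _ (fun y => Num.min y l1) k); last exact: kc.
  apply: (@continuous_min R R id (fun _ => l1)); [exact: cvg_id|exact: cvg_cst].
- move=> x y hxy; rewrite !minE; have := hm _ _ hxy; do 2 case: ltP => ? //; lra.
- move=> x y hxy; apply: km; rewrite !minE; do 2 case: ltP => ? //; lra.
- by move=> x hx; rewrite h0 // minE l10.
- move=> x hx; have := hm _ _ hx; rewrite hc minE; case: ltP => ? //; lra.
- by move=> y hy; rewrite minE; case: ltP => ?; [rewrite k0|lra].
- by move=> y hy; rewrite minE; case: ltP => ? //; lra.
- move=> x /andP[x0 xc].
  have hl : h x <= l1 by rewrite -hc hm.
  rewrite !(minl hl) kh //; apply/andP; split; lra.
- move=> y /andP[y0 yl].
  rewrite (minl yl) hk; last (apply/andP; split; lra).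
  by rewrite (minl yl).
Qed.

Lemma Good_r2 : Good (L - c) (B - l1) rh2 rk2.
Proof.
hyps.
have hc := restr_hc; have /andP[c0 cL] := restr_c_range.
have L0' : 0 <= L by lra.
have r := Good_range L0' G.
have B0 : 0 <= B by lra.
have s := Good_range B0 (Good_sym G).
case: G => hc' kc hm km h0 h1 k0 k1 kh hk.
rewrite /rh2 /rk2; split.
- move=> x; refine (@contB_cst R (fun x0 => Num.max (h (x0 + c)) l1) l1 x _).
  apply: (@continuous_max R R (fun x => h (x + c)) (fun _ => l1)); last exact: cvg_cst.
  apply: (@continuous_comp _ _ _ (fun x => x + c) h); last exact: hc'.
  by apply: contD_cst; exact: cvg_id.
- move=> x; apply: contB_cst.
  apply: (@continuous_comp _ _ _ (fun y => Num.max y 0 + l1) k); last exact: kc.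
  apply: contD_cst.
  apply: (@continuous_max R R id (fun _ => 0)); [exact: cvg_id|exact: cvg_cst].
- move=> x y hxy; rewrite lerD2r !maxE.
  have := hm (x + c) (y + c); rewrite lerD2r => /(_ hxy).
  do 2 case: ltP => ? //; lra.
- move=> x y hxy; rewrite lerD2r; apply: km; rewrite lerD2r !maxE.
  do 2 case: ltP => ? //; lra.
- move=> x hx; have := hm (x + c) c; rewrite hc => /(_ ltac:(lra)).
  by rewrite maxE; case: ltP => ? ?; lra.
- move=> x hx; rewrite h1; last lra.
  by rewrite maxE; case: ltP => ?; lra.
- move=> y hy; have -> : Num.max y 0 = 0 by rewrite maxE; case: ltP => ?; lra.
  by rewrite add0r subrr.
- move=> y hy; rewrite k1; first lra.
  by rewrite maxE; case: ltP => ?; lra.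
- move=> x /andP[x0 xc].
  have hl : l1 <= h (x + c) by have := hm c (x + c); rewrite hc; apply; lra.
  have -> : Num.max (h (x + c)) l1 = h (x + c).
    by rewrite maxE; case: ltP => ?; lra.
  have -> : Num.max (h (x + c) - l1) 0 = h (x + c) - l1.
    by rewrite maxE; case: ltP => ?; lra.
  by rewrite subrK kh ?addrK //; apply/andP; split; lra.
- move=> y /andP[y0 yl].
  have -> : Num.max y 0 = y by rewrite maxE; case: ltP => ?; lra.
  have kc1 : c <= k (y + l1) by rewrite km //; lra.
  rewrite subrK hk; last (apply/andP; split; lra).
  have -> : Num.max (y + l1) l1 = y + l1 by rewrite maxE; case: ltP => ?; lra.
  by rewrite addrK.
Qed.

End Restr.

End Real.

Set Implicit Arguments. Unset Strict Implicit.

Section Topo.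
Variable R : realType.
Implicit Types (a b x y : R) (h k : R -> R).

Definition Iset (a : R) : set R := `[0, a].
Lemma inIcc (a x : R) : (x \in Iset a) = (0 <= x <= a).
Proof. by rewrite /Iset mem_setE in_itv. Qed.

Lemma Icc_range (a : R) (s : Icc0 R a) : 0 <= set_val s <= a.
Proof. by case: s => x /= hx; rewrite -inIcc. Qed.

Definition clampI (a : R) (ha : 0 <= a) (x : R) : Icc0 R a :=
  exist _ (clampR a x) (eq_ind_r is_true (clampR_range x ha) (inIcc a (clampR a x))).

Arguments clampI {a} ha x.
Lemma val_clampI a (ha : 0 <= a) x : set_val (clampI ha x) = clampR a x.
Proof. by []. Qed.

Lemma clampI_val a (ha : 0 <= a) (s : Icc0 R a) : clampI ha (set_val s) = s.
Proof. by apply: val_inj; rewrite /= clampR_id // Icc_range. Qed.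

Lemma set_val_cont a : continuous (@set_val R (Iset a) : Icc0 R a -> R).
Proof. exact: initial_continuous. Qed.

Lemma clampI_cont a (ha : 0 <= a) : continuous (clampI ha).
Proof.
apply: (@continuous_comp_initial _ _ _ set_val).
exact: clampR_cont.
Qed.

Definition Ev a b (ha : 0 <= a) (f : Icc0 R a -> Icc0 R b) : R -> R :=
  fun x => set_val (f (clampI ha x)).
Definition mkI a b (hb : 0 <= b) (h : R -> R) : Icc0 R a -> Icc0 R b :=
  fun s => clampI hb (h (set_val s)).
Arguments mkI a {b} hb h s.
Arguments Ev {a b} ha f x.

Lemma Ev_val a b (ha : 0 <= a) (f : Icc0 R a -> Icc0 R b) (s : Icc0 R a) :
  Ev ha f (set_val s) = set_val (f s).
Proof. by rewrite /Ev clampI_val. Qed.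

Lemma mkI_cont a b (hb : 0 <= b) h : continuous h -> continuous (mkI a hb h).
Proof.
move=> hc x; apply: (@continuous_comp _ _ _ (fun s => h (set_val s)) (clampI hb)).
  apply: (@continuous_comp _ _ _ set_val h); [exact: set_val_cont|exact: hc].
exact: clampI_cont.
Qed.

Lemma Ev_cont a b (ha : 0 <= a) (f : Icc0 R a -> Icc0 R b) : continuous f -> continuous (Ev ha f).
Proof.
move=> fc x; apply: (@continuous_comp _ _ _ (fun x => f (clampI ha x)) set_val).
  apply: (@continuous_comp _ _ _ (clampI ha) f); [exact: clampI_cont|exact: fc].
exact: set_val_cont.
Qed.

Lemma mkG a b (ha : 0 <= a) (hb : 0 <= b) h k : Good a b h k -> is_nd_homeo R a b (mkI a hb h).
Proof.
move=> G; have r := Good_range ha G; have r' := Good_range hb (Good_sym G).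
split; last split.
- move=> x y hxy; rewrite /mkI !val_clampI !clampR_id ?r //; exact: (g_hm G hxy).
- exact/mkI_cont/(g_hc G).
exists (mkI b ha k); split.
- exact/mkI_cont/(g_kc G).
- move=> s; apply: val_inj; rewrite /mkI /= !val_clampI.
  by rewrite (clampR_id (r _)) (g_kh G) ?Icc_range // clampR_id ?Icc_range.
- move=> s; apply: val_inj; rewrite /mkI /= !val_clampI.
  by rewrite (clampR_id (r' _)) (g_hk G) ?Icc_range // clampR_id ?Icc_range.
Qed.

Lemma ends a b (ha : 0 <= a) (hb : 0 <= b) (f : Icc0 R a -> Icc0 R b) g :
  {homo f : x y / set_val x <= set_val y >-> set_val x <= set_val y} ->
  cancel g f -> set_val (f (clampI ha 0)) = 0 /\ set_val (f (clampI ha a)) = b.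
Proof.
move=> fm gf; split.
  have e := gf (clampI hb 0).
  have h1 : set_val (f (clampI ha 0)) <= set_val (clampI hb 0).
    rewrite -e; apply: fm; rewrite val_clampI clampR_le0 //.
    by have /andP[] := Icc_range (g (clampI hb 0)).
  rewrite val_clampI clampR_le0 // in h1.
  by have /andP[h2 _] := Icc_range (f (clampI ha 0)); apply/eqP; rewrite eq_le h1 h2.
have e := gf (clampI hb b).
have h1 : set_val (clampI hb b) <= set_val (f (clampI ha a)).
  rewrite -e; apply: fm; rewrite val_clampI clampR_id; last by rewrite ha lexx.
  by have /andP[] := Icc_range (g (clampI hb b)).
rewrite val_clampI clampR_id in h1; last by rewrite hb lexx.
by have /andP[_ h2] := Icc_range (f (clampI ha a)); apply/eqP; rewrite eq_le h1 h2.
Qed.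

Lemma inv_homo a b (f : Icc0 R a -> Icc0 R b) g :
  {homo f : x y / set_val x <= set_val y >-> set_val x <= set_val y} ->
  cancel f g -> cancel g f ->
  {homo g : x y / set_val x <= set_val y >-> set_val x <= set_val y}.
Proof.
move=> fm fg gf x y hxy; case: (leP (set_val (g x)) (set_val (g y))) => // hlt.
have := fm _ _ (ltW hlt); rewrite !gf => hyx.
have exy : x = y by apply: val_inj; apply/eqP; rewrite eq_le hxy hyx.
by move: hlt; rewrite exy ltxx.
Qed.

Lemma pair_Good a b (ha : 0 <= a) (hb : 0 <= b) (f : Icc0 R a -> Icc0 R b) g :
  {homo f : x y / set_val x <= set_val y >-> set_val x <= set_val y} ->
  {homo g : x y / set_val x <= set_val y >-> set_val x <= set_val y} ->
  continuous f -> continuous g -> cancel f g -> cancel g f ->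
  Good a b (Ev ha f) (Ev hb g).
Proof.
move=> fm gm fc gc fg gf.
have [f0 fa] := ends ha hb fm gf.
have [g0 gb] := ends hb ha gm fg.
split.
- exact: Ev_cont.
- exact: Ev_cont.
- by move=> x y hxy; apply: fm; rewrite !val_clampI clampR_homo.
- by move=> x y hxy; apply: gm; rewrite !val_clampI clampR_homo.
- move=> x hx; rewrite /Ev (_ : clampI ha x = clampI ha 0) ?f0 //; apply: val_inj.
  by rewrite /= !clampR_le0.
- move=> x hx; rewrite /Ev (_ : clampI ha x = clampI ha a) ?fa //; apply: val_inj.
  by rewrite /= clampR_ge // clampR_ge.
- move=> x hx; rewrite /Ev (_ : clampI hb x = clampI hb 0) ?g0 //; apply: val_inj.
  by rewrite /= !clampR_le0.
- move=> x hx; rewrite /Ev (_ : clampI hb x = clampI hb b) ?gb //; apply: val_inj.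
  by rewrite /= clampR_ge // clampR_ge.
- by move=> x hx; rewrite /Ev clampI_val fg val_clampI clampR_id.
- by move=> x hx; rewrite /Ev clampI_val gf val_clampI clampR_id.
Qed.

Lemma homeo_Good a b (ha : 0 <= a) (hb : 0 <= b) (f : Icc0 R a -> Icc0 R b) :
  is_nd_homeo R a b f -> exists k, Good a b (Ev ha f) k.
Proof.
case=> fm [fc [g [gc fg gf]]]; exists (Ev hb g).
by apply: pair_Good => //; exact: inv_homo fm fg gf.
Qed.

Lemma Ev_mkI a b (ha : 0 <= a) (hb : 0 <= b) h k : Good a b h k ->
  forall x, Ev ha (mkI a hb h) x = h x.
Proof.
move=> G x; rewrite /Ev /mkI !val_clampI (Good_clamp _ ha G).
by rewrite clampR_id // (Good_range ha G).
Qed.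

Lemma mkI_Ev a b (ha : 0 <= a) (hb : 0 <= b) (f : Icc0 R a -> Icc0 R b) :
  mkI a hb (Ev ha f) = f.
Proof.
apply/funext => s; apply: val_inj; rewrite /mkI /= Ev_val.
by rewrite clampR_id // Icc_range.
Qed.

End Topo.

Set Implicit Arguments. Unset Strict Implicit.
Arguments clampI {R a} ha x.
Arguments mkI {R} a {b} hb h s.
Arguments Ev {R a b} ha f x.

Section Ev.
Variable R : realType.
Implicit Types (a b x y : R) (h k : R -> R).

Lemma Icc_compact a (ha : 0 <= a) : compact [set: Icc0 R a].
Proof.
have -> : [set: Icc0 R a] = clampI ha @` `[0, a].
  apply/seteqP; split => // s _; exists (set_val s); last exact: clampI_val.
  by rewrite /= in_itv /= Icc_range.
apply: continuous_compact; last exact: segment_compact.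
by apply: continuous_subspaceT => x; exact: clampI_cont.
Qed.

Lemma Icc_lc a (ha : 0 <= a) : locally_compact [set: Icc0 R a].
Proof.
move=> x _; rewrite withinET; exists setT; first exact: filterT.
by split; [exact: Icc_compact|exact: closedT].
Qed.

Definition ev a b (z : G R a b * Icc0 R a) : Icc0 R b := set_val z.1 z.2.

Lemma ev_cont a b (ha : 0 <= a) : continuous (@ev a b).
Proof.
have H := @continuous_uncurry_regular (G R a b) (Icc0 R a) (Icc0 R b) set_val (Icc_lc ha) uniform_regular.
have -> : @ev a b = uncurry set_val by apply/funext => -[].
apply: H.
- exact: initial_continuous.
- by move=> u; have := set_valP u; case=> _ [].
Qed.

Lemma Ev_joint (T : topologicalType) a b (ha : 0 <= a) (phi : T -> G R a b)
  (x : T -> R) (t : T) :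
  {for t, continuous phi} -> {for t, continuous x} ->
  {for t, continuous (fun w => Ev ha (set_val (phi w)) (x w))}.
Proof.
move=> cp cx.
have -> : (fun w => Ev ha (set_val (phi w)) (x w)) =
   (set_val \o (@ev a b)) \o (fun w => (phi w, clampI ha (x w))) by [].
apply: continuous_comp.
  apply: (@cvg_pair _ _ _ _ (nbhs (phi t)) (nbhs (clampI ha (x t)))); first exact: cp.
  apply: (@continuous_comp _ _ _ x (clampI ha)); [exact: cx|exact: clampI_cont].
apply: continuous_comp; [exact: ev_cont|exact: set_val_cont].
Qed.

End Ev.

Set Implicit Arguments. Unset Strict Implicit.
Arguments clampI {R a} ha x.
Arguments mkI {R} a {b} hb h s.
Arguments Ev {R a b} ha f x.

Lemma fst_cont (U V : topologicalType) : continuous (@fst U V).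
Proof. by move=> [x y]; exact: cvg_fst. Qed.
Lemma snd_cont (U V : topologicalType) : continuous (@snd U V).
Proof. by move=> [x y]; exact: cvg_snd. Qed.

Section Main.
Variables (R : realType) (L l1 l2 : R).
Hypotheses (hL : 0 < L) (hl1 : 0 < l1) (hl2 : 0 < l2).

Lemma hB : 0 <= l1 + l2. Proof. by apply: ltW; apply: addr_gt0. Qed.
Lemma hl1' : 0 <= l1. Proof. exact: ltW. Qed.
Lemma hl2' : 0 <= l2. Proof. exact: ltW. Qed.

Lemma sp_gt0_1 (p : set_type (splits R L)) : 0 < (set_val p).1.
Proof. by case: (set_valP p). Qed.
Lemma sp_gt0_2 (p : set_type (splits R L)) : 0 < (set_val p).2.
Proof. by case: (set_valP p) => _ []. Qed.
Lemma sp_sum (p : set_type (splits R L)) : (set_val p).1 + (set_val p).2 = L.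
Proof. by case: (set_valP p) => _ []. Qed.
Lemma sp_ge0_1 (p : set_type (splits R L)) : 0 <= (set_val p).1.
Proof. exact/ltW/sp_gt0_1. Qed.
Lemma sp_ge0_2 (p : set_type (splits R L)) : 0 <= (set_val p).2.
Proof. exact/ltW/sp_gt0_2. Qed.

Definition Funt (p : set_type (splits R L))
   (x : (G R (set_val p).1 l1 * G R (set_val p).2 l2)%type) : Icc0 R L -> Icc0 R (l1 + l2) :=
  mkI L hB (tens (Ev (sp_ge0_1 p) (set_val x.1)) (Ev (sp_ge0_2 p) (set_val x.2)) (set_val p).1).

Lemma G_Good a b (ha : 0 <= a) (hb : 0 <= b) (phi : G R a b) :
  exists k, Good a b (Ev ha (set_val phi)) k.
Proof. exact: (homeo_Good ha hb (set_valP phi)). Qed.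

Lemma tens_Good (p : set_type (splits R L))
   (x : (G R (set_val p).1 l1 * G R (set_val p).2 l2)%type) :
  exists k, Good L (l1 + l2)
     (tens (Ev (sp_ge0_1 p) (set_val x.1)) (Ev (sp_ge0_2 p) (set_val x.2)) (set_val p).1) k.
Proof.
have [k1 G1] := G_Good (sp_ge0_1 p) hl1' x.1.
have [k2 G2] := G_Good (sp_ge0_2 p) hl2' x.2.
have := Good_tens (sp_ge0_1 p) (sp_ge0_2 p) G1 G2; rewrite sp_sum => GG.
by eexists; exact: GG.
Qed.

Lemma Fun_mem (p : set_type (splits R L)) (x : (G R (set_val p).1 l1 * G R (set_val p).2 l2)%type) : Funt x \in Gset R L (l1 + l2).
Proof.
apply: mem_set; have [k GG] := tens_Good x.
exact: (mkG (ltW hL) hB GG).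
Qed.

Definition Fpt (p : set_type (splits R L)) (x : (G R (set_val p).1 l1 * G R (set_val p).2 l2)%type) : G R L (l1 + l2) := exist _ (@Funt p x) (Fun_mem x).
Definition Fmap (z : Gsum R L l1 l2) : G R L (l1 + l2) := Fpt (projT2 z).


Lemma FF_formula (p : set_type (splits R L)) (phi1 : G R (set_val p).1 l1)
                (phi2 : G R (set_val p).2 l2) :
           (forall (s : Icc0 R (set_val p).1) (t : Icc0 R L),
              set_val t = set_val s ->
              set_val (set_val (Fmap (existT _ p (phi1, phi2))) t)
              = set_val (set_val phi1 s)) /\
           (forall (s : Icc0 R (set_val p).2) (t : Icc0 R L),
              set_val t = set_val s + (set_val p).1 ->
              set_val (set_val (Fmap (existT _ p (phi1, phi2))) t)
              = set_val (set_val phi2 s) + l1).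
Proof.
have [k1 G1] := G_Good (sp_ge0_1 p) hl1' phi1.
have [k2 G2] := G_Good (sp_ge0_2 p) hl2' phi2.
have l1p := hl1; have l2p := hl2.
split => s t e; rewrite /Fmap /Fpt /= /Funt /mkI val_clampI e /tens.
- have /andP[s0 s1] := Icc_range s.
  rewrite Ev_val (g_h0 G2); last lra.
  have /andP[r0 r1] := Icc_range (set_val phi1 s).
  by rewrite addr0 clampR_id //; apply/andP; split; lra.
- have /andP[s0 s1] := Icc_range s.
  rewrite addrK Ev_val (g_h1 G1); last lra.
  have /andP[r0 r1] := Icc_range (set_val phi2 s).
  by rewrite clampR_id; [exact: addrC|apply/andP; split; lra].
Qed.


Lemma Fp_cont (p : set_type (splits R L)) : continuous (@Fpt p).
Proof.
apply: (@continuous_comp_initial _ _ _ set_val).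
pose u := fun z : ((G R (set_val p).1 l1 * G R (set_val p).2 l2) * Icc0 R L)%type =>
  clampI hB (tens (Ev (sp_ge0_1 p) (set_val z.1.1)) (Ev (sp_ge0_2 p) (set_val z.1.2))
     (set_val p).1 (set_val z.2)).
have -> : set_val \o @Fpt p = curry u by [].
apply: continuous_curry_fun => z; rewrite /u.
refine (@continuous_comp _ _ _ (fun z : ((G R (set_val p).1 l1 * G R (set_val p).2 l2) * Icc0 R L)%type => tens (Ev (sp_ge0_1 p) (set_val z.1.1))
   (Ev (sp_ge0_2 p) (set_val z.1.2)) (set_val p).1 (set_val z.2)) (clampI hB) z _ _); last first.
  exact: clampI_cont.
have c11 : {for z, continuous (fun z : ((G R (set_val p).1 l1 * G R (set_val p).2 l2) * Icc0 R L)%type => z.1.1)}.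
  apply: (@continuous_comp _ _ _ fst fst); exact: fst_cont.
have c12 : {for z, continuous (fun z : ((G R (set_val p).1 l1 * G R (set_val p).2 l2) * Icc0 R L)%type => z.1.2)}.
  apply: (@continuous_comp _ _ _ fst snd); [exact: fst_cont|exact: snd_cont].
have c2 : {for z, continuous (fun z : ((G R (set_val p).1 l1 * G R (set_val p).2 l2) * Icc0 R L)%type => set_val z.2)}.
  apply: (@continuous_comp _ _ _ snd set_val); [exact: snd_cont|exact: set_val_cont].
rewrite /tens.
refine (@continuousD _ _ _
  (fun z : ((G R (set_val p).1 l1 * G R (set_val p).2 l2) * Icc0 R L)%type => Ev (sp_ge0_1 p) (set_val z.1.1) (set_val z.2))
  (fun z : ((G R (set_val p).1 l1 * G R (set_val p).2 l2) * Icc0 R L)%type => Ev (sp_ge0_2 p) (set_val z.1.2) (set_val z.2 - (set_val p).1)) z _ _).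
  exact: (Ev_joint (ha := sp_ge0_1 p) c11 c2).
refine (Ev_joint (ha := sp_ge0_2 p) c12 _).
exact: (contB_cst (c := (set_val p).1) c2).
Qed.

Lemma FF_cont : continuous Fmap.
Proof. apply: sigT_continuous => p; exact: Fp_cont. Qed.


Lemma FF_surj (psi : G R L (l1 + l2)) : exists z, Fmap z = psi.
Proof.
have L0 := hL; have l10 := hl1; have l20 := hl2.
have l1B : l1 < l1 + l2 by lra.
have [k Gp] := G_Good (ltW hL) hB psi.
set h := Ev (ltW hL) (set_val psi) in Gp.
have /andP[c0 cL] := restr_c_range L0 l10 l1B Gp.
set c := k l1 in c0 cL.
have G1 := Good_r1 L0 l10 l1B Gp.
have G2 := Good_r2 L0 l10 l1B Gp.
have e2 : l1 + l2 - l1 = l2 by rewrite [l1 + l2]addrC addrK.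
rewrite e2 in G2.
have spl : (c, L - c) \in splits R L.
  by apply: mem_set; rewrite /splits /=; split; [|split]; lra.
pose p : set_type (splits R L) := exist _ (c, L - c) spl.
have c0' : 0 <= c by lra.
have Lc0 : 0 <= L - c by lra.
pose x1 : G R c l1 := exist _ (mkI c hl1' (rh1 l1 h)) (mem_set (mkG c0' hl1' G1)).
pose x2 : G R (L - c) l2 := exist _ (mkI (L - c) hl2' (rh2 l1 h k)) (mem_set (mkG Lc0 hl2' G2)).
exists (existT _ p (x1, x2)).
apply: val_inj; rewrite /= /Funt /=.
have -> : tens (Ev (sp_ge0_1 p) (mkI c hl1' (rh1 l1 h)))
     (Ev (sp_ge0_2 p) (mkI (L - c) hl2' (rh2 l1 h k))) c = h.
  apply/funext => x; rewrite /tens (Ev_mkI _ _ G1) (Ev_mkI _ _ G2).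
  exact: (restr_tens h k L0 l10 l1B x).
exact: mkI_Ev.
Qed.

Lemma FF_at_split (p : set_type (splits R L)) (phi1 : G R (set_val p).1 l1)
                (phi2 : G R (set_val p).2 l2) :
  set_val (set_val (Fmap (existT _ p (phi1, phi2))) (clampI (ltW hL) (set_val p).1)) = l1.
Proof.
have [k1 G1] := G_Good (sp_ge0_1 p) hl1' phi1.
have p1 := sp_gt0_1 p; have p2 := sp_gt0_2 p; have ps := sp_sum p.
have [f1 _] := FF_formula phi1 phi2.
rewrite (f1 (clampI (sp_ge0_1 p) (set_val p).1)).
  exact: (g_h1 G1 (lexx _)).
rewrite !val_clampI !clampR_id //; apply/andP; split; lra.
Qed.

Lemma FF_inj : injective Fmap.
Proof.
move=> [p [phi1 phi2]] [q [chi1 chi2]] e.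
have e1 := FF_at_split phi1 phi2.
have e2 := FF_at_split chi1 chi2.
rewrite e in e1.
have [_ [_ [g [_ fg _]]]] := set_valP (Fmap (existT _ q (chi1, chi2))).
have inj := can_inj fg.
have epq1 : (set_val p).1 = (set_val q).1.
  have := sp_gt0_1 p; have := sp_gt0_1 q; have := sp_gt0_2 p; have := sp_gt0_2 q.
  have := sp_sum p; have := sp_sum q => ? ? ? ? ? ?.
  have : clampI (ltW hL) (set_val p).1 = clampI (ltW hL) (set_val q).1.
    by apply: inj; apply: val_inj; exact: (etrans e1 (esym e2)).
  move/(congr1 set_val); rewrite !val_clampI !clampR_id //; apply/andP; split; lra.
have epq : p = q.
  have H : set_val p = set_val q.
    rewrite [set_val p]surjective_pairing [set_val q]surjective_pairing epq1; congr pair.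
    have := sp_sum p; have := sp_sum q; rewrite epq1; lra.
  by apply: val_inj; exact: H.
subst q.
have [f1 f2] := FF_formula phi1 phi2.
have [g1 g2] := FF_formula chi1 chi2.
have p1 := sp_gt0_1 p; have p2 := sp_gt0_2 p; have ps := sp_sum p.
have -> : phi1 = chi1.
  apply: val_inj; apply/funext => s; apply: val_inj.
  have /andP[s0 s1] := Icc_range s.
  have hs : set_val (clampI (ltW hL) (set_val s)) = set_val s.
    by rewrite val_clampI clampR_id //; apply/andP; split; lra.
  have := f1 s _ hs; have := g1 s _ hs; rewrite e => Hg Hf.
  exact: (etrans (esym Hf) Hg).
have -> // : phi2 = chi2.
apply: val_inj; apply/funext => s; apply: val_inj.
have /andP[s0 s1] := Icc_range s.
have hs : set_val (clampI (ltW hL) (set_val s + (set_val p).1)) = set_val s + (set_val p).1.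
  by rewrite val_clampI clampR_id //; apply/andP; split; lra.
apply: (@addIr _ l1).
have := f2 s _ hs; have := g2 s _ hs; rewrite e => Hg Hf.
exact: (etrans (esym Hf) Hg).
Qed.

Lemma FF_bij : bijective Fmap.
Proof.
pose g psi := projT1 (cid (FF_surj psi)).
have gK : cancel g Fmap by move=> psi; exact: (projT2 (cid (FF_surj psi))).
exists g => // z; apply: FF_inj; exact: gK.
Qed.

End Main.

Set Implicit Arguments. Unset Strict Implicit.
Arguments clampI {R a} ha x.
Arguments mkI {R} a {b} hb h s.
Arguments Ev {R a b} ha f x.

Lemma lin_joint (R : realType) (T : topologicalType) (A X : T -> R) (b : R) (t : T) :
  {for t, continuous A} -> {for t, continuous X} -> 0 < A t ->
  {for t, continuous (fun w => lin (A w) b (X w))}.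
Proof.
move=> cA cX A0; rewrite /lin /clampR.
refine (@continuousM _ _ (fun w => Num.min (Num.max (X w) 0) (A w)) (fun w => b / A w) t _ _).
  refine (@continuous_min R T (fun w => Num.max (X w) 0) A t _ cA).
  exact: (@continuous_max R T X (fun _ => 0) t cX (cvg_cst _)).
refine (@continuousM _ _ (fun _ => b) (fun w => (A w)^-1) t (cvg_cst _) _).
by apply: continuousV => //; rewrite gt_eqF.
Qed.

Section NH.
Variables (R : realType) (L l1 l2 : R).
Hypotheses (hL : 0 < L) (hl1 : 0 < l1) (hl2 : 0 < l2).

Definition cl (c : R) : R := clampR (L / 2) (c - L / 4) + L / 4.

Lemma cl_range c : L / 4 <= cl c <= 3 * L / 4.
Proof.
have L0 := hL.
have /andP[h1 h2] := @clampR_range R (L / 2) (c - L / 4) ltac:(lra).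
rewrite /cl; apply/andP; split; lra.
Qed.

Lemma cl_id c : L / 4 <= c <= 3 * L / 4 -> cl c = c.
Proof.
have L0 := hL; case/andP => h1 h2.
by rewrite /cl clampR_id ?subrK //; apply/andP; split; lra.
Qed.

Lemma cl_pos c : 0 < cl c.
Proof. have L0 := hL; have /andP[h1 h2] := cl_range c; lra. Qed.
Lemma cl_pos2 c : 0 < L - cl c.
Proof. have L0 := hL; have /andP[h1 h2] := cl_range c; lra. Qed.

Lemma cl_cont : continuous cl.
Proof.
move=> c; refine (contD_cst (f := fun c => clampR (L / 2) (c - L / 4)) (c := L / 4) _).
refine (@continuous_comp _ _ _ (fun c => c - L / 4) (clampR (L / 2)) c _ _).
  by refine (contB_cst (f := id) (c := L / 4) _); exact: cvg_id.
exact: clampR_cont.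
Qed.

Lemma pc_mem c : (cl c, L - cl c) \in splits R L.
Proof.
apply: mem_set; rewrite /splits /=; split; first exact: cl_pos.
by split; [exact: cl_pos2|rewrite addrC subrK].
Qed.

Definition pc c : set_type (splits R L) := exist _ (cl c, L - cl c) (pc_mem c).

Definition lin1 c : G R (cl c) l1 :=
  exist _ (mkI (cl c) (hl1' hl1) (lin (cl c) l1))
    (mem_set (mkG (ltW (cl_pos c)) (hl1' hl1) (Good_lin (cl_pos c) hl1))).
Definition lin2 c : G R (L - cl c) l2 :=
  exist _ (mkI (L - cl c) (hl2' hl2) (lin (L - cl c) l2))
    (mem_set (mkG (ltW (cl_pos2 c)) (hl2' hl2) (Good_lin (cl_pos2 c) hl2))).

Definition gam c : G R L (l1 + l2) := Fmap hL hl1 hl2 (existT _ (pc c) (lin1 c, lin2 c)).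

Lemma gam_val c : set_val (gam c) =
  mkI L (hB hl1 hl2) (fun x => lin (cl c) l1 x + lin (L - cl c) l2 (x - cl c)).
Proof.
unfold gam, Fmap, Fpt, Funt; rewrite /=; congr (mkI L (hB hl1 hl2) _); apply/funext => x.
rewrite /tens (Ev_mkI _ _ (Good_lin (cl_pos c) hl1)).
by rewrite (Ev_mkI _ _ (Good_lin (cl_pos2 c) hl2)).
Qed.

Lemma gam_cont : continuous gam.
Proof.
apply: (@continuous_comp_initial _ _ _ set_val).
pose v := fun z : (R * Icc0 R L)%type => clampI (hB hl1 hl2)
   (lin (cl z.1) l1 (set_val z.2) + lin (L - cl z.1) l2 (set_val z.2 - cl z.1)).
have -> : set_val \o gam = curry v by apply/funext => c; rewrite /= gam_val.
apply: continuous_curry_fun => z; rewrite /v.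
refine (@continuous_comp _ _ _ (fun z : (R * Icc0 R L)%type =>
   lin (cl z.1) l1 (set_val z.2) + lin (L - cl z.1) l2 (set_val z.2 - cl z.1))
   (clampI (hB hl1 hl2)) z _ _); last exact: clampI_cont.
have c1 : {for z, continuous (fun z : (R * Icc0 R L)%type => cl z.1)}.
  apply: (@continuous_comp _ _ _ fst cl); [exact: fst_cont|exact: cl_cont].
have c2 : {for z, continuous (fun z : (R * Icc0 R L)%type => set_val z.2)}.
  apply: (@continuous_comp _ _ _ snd set_val); [exact: snd_cont|exact: set_val_cont].
refine (@continuousD _ _ _
  (fun z : (R * Icc0 R L)%type => lin (cl z.1) l1 (set_val z.2))
  (fun z : (R * Icc0 R L)%type => lin (L - cl z.1) l2 (set_val z.2 - cl z.1)) z _ _).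
  exact: (lin_joint c1 c2 (cl_pos _)).
refine (@lin_joint R _ (fun z : (R * Icc0 R L)%type => L - cl z.1) (fun z : (R * Icc0 R L)%type => set_val z.2 - cl z.1) l2 z _ _ (cl_pos2 _)).
  refine (@continuousB _ _ _ (fun _ => L) (fun z : (R * Icc0 R L)%type => cl z.1) z (cvg_cst _) c1).
refine (@continuousB _ _ _ (fun z : (R * Icc0 R L)%type => set_val z.2) (fun z : (R * Icc0 R L)%type => cl z.1) z c2 c1).
Qed.


Lemma not_homeo : ~ (exists H : G R L (l1 + l2) -> Gsum R L l1 l2,
   [/\ continuous H, cancel (Fmap hL hl1 hl2) H & cancel H (Fmap hL hl1 hl2)]).
Proof.
case=> H [Hc FH HF].
have L0 := hL.
pose S := existT (fun p : set_type (splits R L) => (G R (set_val p).1 l1 * G R (set_val p).2 l2)%type)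
   (pc (L / 2)) @` [set: (G R (set_val (pc (L / 2))).1 l1 * G R (set_val (pc (L / 2))).2 l2)%type].
have oS : open S by apply: existT_open_map; exact: openT.
have Sa : S (H (gam (L / 2))) by rewrite /gam FH; exists (lin1 (L / 2), lin2 (L / 2)).
have : \forall c \near (L / 2), S (H (gam c)).
  have := @continuous_comp _ _ _ gam H (L / 2) (fun P => @gam_cont (L / 2) P) (fun P => @Hc (gam (L / 2)) P).
  apply; exact: open_nbhs_nbhs.
move/nbhs_ballP => [e /= e0 He].
have [d [d0 d1 d2]] : exists d, [/\ 0 < d, d <= e / 2 & d <= L / 8].
  by case: (ltP (e / 2) (L / 8)) => h; [exists (e / 2)|exists (L / 8)]; split; lra.
have : ball (L / 2) e (L / 2 + d).
  rewrite -ball_normE /ball_ /=.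
  have -> : L / 2 - (L / 2 + d) = - d by rewrite opprD addrA subrr add0r.
  rewrite normrN ger0_norm; lra.
move/He => /= [y _ ey].
rewrite /gam FH in ey.
have := congr1 (fun z => (set_val (projT1 z)).1) ey; rewrite /= => e'.
rewrite !cl_id in e'; try (apply/andP; split; lra).
lra.
Qed.

End NH.

Unset Implicit Arguments. Set Strict Implicit.

Theorem proposition4p6 (R : realType) (L l1 l2 : R) :
  0 < L -> 0 < l1 -> 0 < l2 ->
  exists F : Gsum R L l1 l2 -> G R L (l1 + l2),
    [/\ (* F is induced by (phi1, phi2) |-> phi1 (x) phi2 *)
        (forall (p : set_type (splits R L)) (phi1 : G R (set_val p).1 l1)
                (phi2 : G R (set_val p).2 l2),
           (forall (s : Icc0 R (set_val p).1) (t : Icc0 R L),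
              set_val t = set_val s ->
              set_val (set_val (F (existT _ p (phi1, phi2))) t)
              = set_val (set_val phi1 s)) /\
           (forall (s : Icc0 R (set_val p).2) (t : Icc0 R L),
              set_val t = set_val s + (set_val p).1 ->
              set_val (set_val (F (existT _ p (phi1, phi2))) t)
              = set_val (set_val phi2 s) + l1)),
        continuous F,
        bijective F &
        ~ (exists H : G R L (l1 + l2) -> Gsum R L l1 l2,
              [/\ continuous H, cancel F H & cancel H F])].
Proof.
move=> hL hl1 hl2; exists (Fmap hL hl1 hl2); split.
- move=> p phi1 phi2; exact: FF_formula.
- exact: FF_cont.
- exact: FF_bij.
- exact: not_homeo.
Qed.
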